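(* For any family of policies $\Pi$, $\mathrm{CH}(\Pi)\subseteq\mathrm{CDUS}(\Pi)$.
   Context: $\Pi=\{\pi_1,\pi_2,\dots\}$ is a family of policies of a multi-objective sequential decision problem with $d$ objectives; each $\pi\in\Pi$ has a random return vector $\mathbf{Z}^\pi\in\mathbb{R}^d$ with finite expectation $\mathbf{V}^\pi=\mathbb{E}[\mathbf{Z}^\pi]$. $\Delta^{|\Pi|}$ denotes probability weight vectors $\lambda$ over $\Pi$, and $\sum_i\lambda_i\mathbf{Z}^{\pi_i}$ denotes the mixture distribution (CDF $\sum_i\lambda_iF_{\mathbf{Z}^{\pi_i}}$). For $\mathbf{x},\mathbf{y}\in\mathbb{R}^d$: $\mathbf{y}\preceq_p\mathbf{x}$ iff $y_i\le x_i$ for all $i$; $\mathbf{x}\succ_p\mathbf{y}$ iff $x_i\ge y_i$ for all $i$ and $x_i>y_i$ for some $i$. CDF: $F_{\mathbf{X}}(\mathbf{x})=P(\mathbf{X}\preceq_p\mathbf{x})$. $\mathbf{X}\succeq_{\mathrm{FSD}}\mathbf{Y}$ iff $F_{\mathbf{X}}\le F_{\mathbf{Y}}$ pointwise; $\succ_{\mathrm{FSD}}$ additionally requires strict inequality at some point. $\mathbf{X}\succ_d\mathbf{Y}$ iff $\mathbf{X}\succeq_{\mathrm{FSD}}\mathbf{Y}$ and $X_j\succ_{\mathrm{FSD}}Y_j$ for some marginal $j$. Convex hull: $\mathrm{CH}(\Pi)=\{\pi\in\Pi:\nexists\lambda\in\Delta^{|\Pi|},\ \sum_i\lambda_i\mathbf{V}^{\pi_i}\succ_p\mathbf{V}^\pi\}$.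 Convex distributional undominated set: $\mathrm{CDUS}(\Pi)=\{\pi\in\Pi:\nexists\lambda\in\Delta^{|\Pi|},\ \sum_i\lambda_i\mathbf{Z}^{\pi_i}\succ_d\mathbf{Z}^\pi\}$. *)

(* Defs.v *)
From HB Require Import structures.
From mathcomp Require Import all_boot all_order all_algebra.
From mathcomp Require Import all_classical all_reals all_analysis.
Set Implicit Arguments. Unset Strict Implicit. Unset Printing Implicit Defensive.
Import Order.TTheory GRing.Theory Num.Theory.
Local Open Scope ring_scope.
Local Open Scope classical_set_scope.

Section Defs.
Variables (R : realType) (d : nat).

Definition pleq (y x : 'I_d -> R) : Prop := forall j, y j <= x j.
Definition psucc (x y : 'I_d -> R) : Prop :=
  (forall j, y j <= x j) /\ (exists j, y j < x j).

(* A (real-valued) distribution on R^d is described, for the purpose of the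
   dominance relations, by its joint CDF and its d marginal CDFs. *)
Record dist_cdfs := DistCdfs {
  joint_cdf : ('I_d -> R) -> R ;
  marg_cdf : 'I_d -> R -> R }.

Definition cdfs_of {dm : measure_display} {T : measurableType dm}
  (P : probability T R) (Z : T -> 'I_d -> R) : dist_cdfs :=
  DistCdfs (fun x => fine (P [set w : T | pleq (Z w) x]))
           (fun j t => fine (P [set w : T | Z w j <= t])).

Definition expect_vec {dm : measure_display} {T : measurableType dm}
  (P : probability T R) (Z : T -> 'I_d -> R) : 'I_d -> R :=
  fun j => fine (\int[P]_w (Z w j)%:E)%E.

Definition simplex (n : nat) (lam : 'I_n -> R) : Prop :=
  (forall i, 0 <= lam i) /\ \sum_(i < n) lam i = 1.

(* Mixture distribution sum_i lam_i Z^{pi_i}: its CDF is sum_i lam_i F_i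
   (and so are its marginal CDFs). *)
Definition mixture (n : nat) (lam : 'I_n -> R) (D : 'I_n -> dist_cdfs)
  : dist_cdfs :=
  DistCdfs (fun x => \sum_(i < n) lam i * joint_cdf (D i) x)
           (fun j t => \sum_(i < n) lam i * marg_cdf (D i) j t).

Definition mix_vec (n : nat) (lam : 'I_n -> R) (V : 'I_n -> 'I_d -> R)
  : 'I_d -> R := fun j => \sum_(i < n) lam i * V i j.

Definition sfsd1 (FX FY : R -> R) : Prop :=
  (forall t, FX t <= FY t) /\ (exists t, FX t < FY t).

Definition wfsd (X Y : dist_cdfs) : Prop :=
  forall x, joint_cdf X x <= joint_cdf Y x.

Definition ddom (X Y : dist_cdfs) : Prop :=
  wfsd X Y /\ exists j, sfsd1 (marg_cdf X j) (marg_cdf Y j).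

Definition CH (n : nat) (V : 'I_n -> 'I_d -> R) (k : 'I_n) : Prop :=
  ~ exists lam, simplex lam /\ psucc (mix_vec lam V) (V k).

Definition CDUS (n : nat) (D : 'I_n -> dist_cdfs) (k : 'I_n) : Prop :=
  ~ exists lam, simplex lam /\ ddom (mixture lam D) (D k).
End Defs.

(* Main.v *)
Require Import Defs.
From HB Require Import structures.
From mathcomp Require Import all_boot all_order all_algebra.
From mathcomp Require Import all_classical all_reals all_analysis.
From mathcomp Require Import measurable_realfun lra.
Import Order.TTheory GRing.Theory Num.Theory.
Import numFieldNormedType.Exports.
Local Open Scope ring_scope.
Local Open Scope classical_set_scope.

Lemma lee0fin (R : realType) (x : R) : 0 <= x -> ((0%R : \bar R) <= x%:E)%E.
Proof. by rewrite lee_fin. Qed.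

Lemma leefin (R : realType) (x y : R) : x <= y -> (x%:E <= y%:E)%E.
Proof. by rewrite lee_fin. Qed.

Lemma int_mix (R : realType) (D : set R) (mD : measurable D) (n : nat)
  (lam : 'I_n -> R) (lam0 : forall i, 0 <= lam i)
  (f : 'I_n -> R -> R) (mf : forall i, measurable_fun D (f i))
  (f0 : forall i t, D t -> 0 <= f i t) (F : 'I_n -> R)
  (hF : forall i, (F i)%:E = (\int[lebesgue_measure]_(t in D) (f i t)%:E)%E) :
  (\sum_(i < n) lam i * F i)%:E =
  (\int[lebesgue_measure]_(t in D) (\sum_(i < n) lam i * f i t)%:E)%E.
Proof.
rewrite -sumEFin.
transitivity (\sum_(i < n) \int[lebesgue_measure]_(t in D) ((lam i)%:E * (f i t)%:E))%E.
  apply: eq_bigr => i _; rewrite EFinM hF ge0_integralZl_EFin //.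
  - by move=> t Dt; apply: lee0fin; exact: f0.
  - by have := mf i; move/measurable_EFinP.
rewrite -ge0_integral_sum //.
- apply: eq_integral => t _; rewrite -sumEFin.
  by apply: eq_bigr => j _; rewrite EFinM.
- move=> j.
  have : measurable_fun D (fun t => lam j * f j t) by apply: measurable_funM.
  move/measurable_EFinP; apply: eq_measurable_fun => t _ /=; by rewrite EFinM.
- by move=> j t Dt; rewrite -EFinM; apply: lee0fin; rewrite mulr_ge0 // f0.
Qed.

Lemma int_strict (R : realType) (D : set R) (mD : measurable D) (f g : R -> R)
  (mf : measurable_fun D f) (mg : measurable_fun D g)
  (f0 : forall t, D t -> 0 <= f t) (fg : forall t, D t -> f t <= g t)
  (fin : (\int[lebesgue_measure]_(t in D) (f t)%:E)%E \is a fin_num)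
  (a b e : R) (ab : a < b) (e0 : 0 < e) (sub : `[a, b] `<=` D)
  (fge : forall t, a <= t <= b -> f t + e <= g t) :
  (\int[lebesgue_measure]_(t in D) (f t)%:E <
   \int[lebesgue_measure]_(t in D) (g t)%:E)%E.
Proof.
have mI : measurable (`[a, b] : set R) by exact: measurable_itv.
have mh : measurable_fun D (fun t => e * \1_(`[a, b] : set R) t).
  by apply: measurable_funM => //; exact: measurable_indic.
have h0 t : D t -> 0 <= e * \1_(`[a, b] : set R) t.
  by move=> _; rewrite mulr_ge0 // ?ltW // indicE; case: (_ \in _).
apply: (@lt_le_trans _ _ (\int[lebesgue_measure]_(t in D) ((f t)%:E + (e * \1_(`[a, b] : set R) t)%:E))%E).
  rewrite ge0_integralD //; last 2 first.
  - exact/measurable_EFinP.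
  - exact/measurable_EFinP.
  rewrite lteDl //.
  under eq_integral do rewrite EFinM.
  rewrite ge0_integralZl_EFin //; last 2 first.
  - have := @measurable_indic _ _ R D _ mI.
    by move/measurable_EFinP.
  - exact: ltW.
  rewrite integral_indic // setIidl //.
  change (0 < e%:E * lebesgue_measure (`[a, b] : set R))%E.
  have -> : lebesgue_measure (`[a, b] : set R) = (b - a)%:E.
    by have := lebesgue_measure_itv `[a, b]%R; rewrite /= lte_fin ab EFinB.
  by rewrite -EFinM lte_fin mulr_gt0 // subr_gt0.
apply: ge0_le_integral => //.
- by move=> t Dt; rewrite -EFinD; apply: lee0fin; exact: addr_ge0 (f0 _ Dt) (h0 _ Dt).
- by apply/measurable_EFinP; exact: measurable_funD.
- exact/measurable_EFinP.
- move=> t Dt; rewrite -EFinD lee_fin indicE.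
  case: (boolP (t \in _)) => [/[!inE] /= tI | _].
  + by rewrite mulr1 fge // -(@in_itv _ `[a, b]).
  + by rewrite mulr0 addr0 fg.
Qed.

Lemma core (R : realType) (n : nat) (lam : 'I_n -> R) (hs : simplex lam) (k : 'I_n)
  (c : 'I_n -> R -> R) (c0 : forall i t, 0 <= c i t) (c1 : forall i t, c i t <= 1)
  (cnd : forall i s t, s <= t -> c i s <= c i t)
  (A B : 'I_n -> R)
  (hA : forall i, (A i)%:E = (\int[lebesgue_measure]_(t in `[0%R, +oo[) (1 - c i t)%:E)%E)
  (hB : forall i, (B i)%:E = (\int[lebesgue_measure]_(t in `]-oo, 0%R[) (c i t)%:E)%E)
  (H : forall t, \sum_(i < n) lam i * c i t <= c k t) :
  A k - B k <= \sum_(i < n) lam i * (A i - B i) /\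
  ((exists a b e, [/\ a < b, 0 < e &
       forall t, a <= t <= b -> \sum_(i < n) lam i * c i t + e <= c k t]) ->
   A k - B k < \sum_(i < n) lam i * (A i - B i)).
Proof.
case: hs => lam0 lam1.
pose G t := \sum_(i < n) lam i * c i t.
have G0 t : 0 <= G t by apply: sumr_ge0 => i _; rewrite mulr_ge0.
have G1 t : G t <= 1 by apply: le_trans (H t) (c1 _ _).
have Gnd s t : s <= t -> G s <= G t.
  by move=> st; apply: ler_sum => i _; rewrite ler_wpM2l // cnd.
have mI : measurable (`[0%R, +oo[ : set R) by exact: measurable_itv.
have mJ : measurable (`]-oo, 0%R[ : set R) by exact: measurable_itv.
have mc D i : measurable D -> measurable_fun D (c i).
  by move=> mD; apply: nondecreasing_measurable => // s t; exact: cnd.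
have mc' D i : measurable D -> measurable_fun D (fun t => 1 - c i t).
  by move=> mD; apply: nonincreasing_measurable => // s t st; rewrite lerB // cnd.
have mG D : measurable D -> measurable_fun D G.
  by move=> mD; apply: nondecreasing_measurable => // s t; exact: Gnd.
have mG' D : measurable D -> measurable_fun D (fun t => 1 - G t).
  by move=> mD; apply: nonincreasing_measurable => // s t st; rewrite lerB // Gnd.
have SA : (\sum_(i < n) lam i * A i)%:E =
    (\int[lebesgue_measure]_(t in `[0%R, +oo[) (1 - G t)%:E)%E.
  rewrite (@int_mix _ _ mI _ _ lam0 (fun i t => 1 - c i t)) //.
  - apply: eq_integral => t _; congr EFin.
    under eq_bigr do rewrite mulrBr mulr1.
    by rewrite sumrB lam1.
  - by move=> i; exact: mc'.
  - by move=> i t _; rewrite subr_ge0.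
have SB : (\sum_(i < n) lam i * B i)%:E =
    (\int[lebesgue_measure]_(t in `]-oo, 0%R[) (G t)%:E)%E.
  by rewrite (@int_mix _ _ mJ _ _ lam0 c) // => i; exact: mc.
have finA : (\int[lebesgue_measure]_(t in `[0%R, +oo[) (1 - c k t)%:E)%E \is a fin_num.
  by rewrite -hA.
have finB : (\int[lebesgue_measure]_(t in `]-oo, 0%R[) (G t)%:E)%E \is a fin_num.
  by rewrite -SB.
have WA : A k <= \sum_(i < n) lam i * A i.
  rewrite -lee_fin hA SA; apply: ge0_le_integral => //.
  - by move=> t _; apply: lee0fin; rewrite subr_ge0.
  - by have := mc' _ k mI; move/measurable_EFinP.
  - by have := mG' _ mI; move/measurable_EFinP.
  - by move=> t _; apply: leefin; apply: lerB => //; exact: H.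
have WB : \sum_(i < n) lam i * B i <= B k.
  rewrite -lee_fin hB SB; apply: ge0_le_integral => //.
  - by move=> t _; apply: lee0fin.
  - by have := mG _ mJ; move/measurable_EFinP.
  - by have := mc _ k mJ; move/measurable_EFinP.
  - by move=> t _; apply: leefin; exact: H.
have Esum : \sum_(i < n) lam i * (A i - B i) =
    \sum_(i < n) lam i * A i - \sum_(i < n) lam i * B i.
  by under eq_bigr do rewrite mulrBr; rewrite sumrB.
rewrite Esum; split; first lra.
case=> a [b [e [ab e0 hab]]].
have [a0 | a0] := leP 0 a.
- have SA' : A k < \sum_(i < n) lam i * A i.
    rewrite -lte_fin hA SA.
    apply: (@int_strict _ _ mI _ _ (mc' _ k mI) (mG' _ mI) _ _ finA a b e) => //.
    + by move=> t _; rewrite subr_ge0.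
    + by move=> t _; apply: lerB => //; exact: H.
    + move=> t /=; rewrite !in_itv /= andbT => /andP [ha hb].
      exact: le_trans a0 ha.
    + by move=> t /hab h; rewrite /G /=; lra.
  lra.
- pose b' := Num.min b (a / 2).
  have ab' : a < b' by rewrite /b' lt_min ab /=; lra.
  have SB' : \sum_(i < n) lam i * B i < B k.
    rewrite -lte_fin hB SB.
    apply: (@int_strict _ _ mJ _ _ (mG _ mJ) (mc _ k mJ) _ _ finB a b' e) => //.
    + by move=> t _; exact: H.
    + move=> t /=; rewrite !in_itv /= => /andP [ha hb].
      have : b' <= a / 2 by rewrite /b' ge_min lexx orbT.
      lra.
    + move=> t /andP [ha hb]; apply: hab; rewrite ha /=.
      apply: le_trans hb _; rewrite /b' ge_min lexx //.
  lra.
Qed.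

Lemma mle (R : realType) (dm : measure_display) (T : measurableType dm)
  (X : T -> R) (mX : measurable_fun setT X) r : measurable [set w | X w <= r].
Proof.
have -> : [set w | X w <= r] = setT `&` X @^-1` `]-oo, r].
  apply/seteqP; split => w /=.
  - by move=> h; split => //; rewrite in_itv.
  - by case=> _; rewrite in_itv.
by apply: (mX measurableT); exact: measurable_itv.
Qed.

Lemma mple (R : realType) (d : nat) (dm : measure_display) (T : measurableType dm)
  (Z : T -> 'I_d -> R) (mZ : forall j, measurable_fun setT (fun w => Z w j))
  (x : 'I_d -> R) : measurable [set w | pleq (Z w) x].
Proof.
have -> : [set w | pleq (Z w) x] = \bigcap_(i in setT) [set w | Z w i <= x i].
  apply/seteqP; split => w /=.
  - by move=> h i _; exact: h.
  - by move=> h i; exact: h i I.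
apply: fin_bigcap_measurable; first exact: finite_finset.
by move=> i _; exact: mle.
Qed.

Lemma marg_cvg (R : realType) (d : nat) (dm : measure_display) (T : measurableType dm)
  (P : probability T R)
  (Z : T -> 'I_d -> R) (mZ : forall j, measurable_fun setT (fun w => Z w j))
  (j : 'I_d) (t : R) :
  (fun m : nat => fine (P [set w | pleq (Z w) (fun i => if i == j then t else m%:R)]))
    @ \oo --> (fine (P [set w | Z w j <= t]) : R).
Proof.
pose F := fun m : nat => [set w | pleq (Z w) (fun i => if i == j then t else m%:R)].
have U : \bigcup_m F m = [set w | Z w j <= t].
  apply/seteqP; split => w.
  - by case=> m _ h; have := h j; rewrite eqxx.
  - move=> /= h; exists (Num.trunc (\sum_i `|Z w i|)).+1 => //.
    move=> i; case: eqP => [->//|_].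
    apply: le_trans (ltW (truncnS_gt _)).
    apply: le_trans (ler_norm _) _.
    by rewrite (bigD1 i) //= lerDl sumr_ge0.
have mU : measurable (\bigcup_m F m) by rewrite U; exact: mle.
have := @nondecreasing_cvg_mu _ _ _ P F (fun m => @mple R d dm T Z mZ _) mU.
rewrite U => /(_ _) h.
have h2 : (P \o F) x @[x --> \oo] --> (fine (P [set w | Z w j <= t]))%:E.
  have fn : P [set w | Z w j <= t] \is a fin_num.
    by apply: fin_num_measure; exact: mle.
  rewrite fineK //.
  apply: h => m n mn; apply/subsetPset => w hw i; have := hw i; case: eqP => // _ hi.
  by apply: le_trans hi _; rewrite ler_nat.
exact: (fine_cvg h2).
Qed.

Lemma layer (R : realType) (dm : measure_display) (T : measurableType dm)
  (P : probability T R) (X : T -> R)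
  (iX : P.-integrable setT (fun w => (X w)%:E)) :
  let c := fun t => fine (P [set w | X w <= t]) in
  [/\ (\int[P]_w (X w)%:E)%E =
     (\int[lebesgue_measure]_(t in `[0%R, +oo[) ((1 - c t)%:E)
      - \int[lebesgue_measure]_(t in `]-oo, 0%R[) ((c t)%:E))%E,
     (\int[lebesgue_measure]_(t in `[0%R, +oo[) ((1 - c t)%:E))%E \is a fin_num &
     (\int[lebesgue_measure]_(t in `]-oo, 0%R[) ((c t)%:E))%E \is a fin_num].
Proof.
move=> c.
have mX : measurable_fun setT X.
  by apply/measurable_EFinP; exact: (measurable_int _ iX).
pose Xr : {RV P >-> R} := mfun_Sub (mem_set mX : X \in mfun).
have L1 : (Xr : T -> R) \in Lfun P 1 by apply/Lfun1_integrable.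
have := expectation_cdf_ccdf L1.
rewrite expectation_def.
have Ec r : cdf Xr r = (c r)%:E.
  rewrite /cdf /c fineK ?fin_num_measure //=. rewrite /distribution /pushforward. exact: mle.
have Ecc r : ccdf Xr r = (1 - c r)%:E.
  rewrite ccdf_1_cdf Ec //.
have E1 : (\int[lebesgue_measure]_(r in `[0%R, +oo[) ccdf Xr r)%E =
   (\int[lebesgue_measure]_(t in `[0%R, +oo[) ((1 - c t)%:E))%E.
  by apply: eq_integral => r _; rewrite Ecc.
have E2 : (\int[lebesgue_measure]_(r in `]-oo, 0%R[) cdf Xr r)%E =
   (\int[lebesgue_measure]_(t in `]-oo, 0%R[) ((c t)%:E))%E.
  by apply: eq_integral => r _; rewrite Ec.
rewrite E1 E2 => E.
have F : (\int[P]_w (X w)%:E)%E \is a fin_num by exact: integrable_fin_num iX.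
have F' := F; rewrite [X in X \is a fin_num]E fin_numB in F'.
by case/andP: F' => F1 F2; split.
Qed.


Lemma cprops (R : realType) (dm : measure_display) (T : measurableType dm)
  (P : probability T R) (X : T -> R) (mX : measurable_fun setT X) :
  let c := fun t => fine (P [set w | X w <= t]) in
  [/\ forall t, 0 <= c t, forall t, c t <= 1,
      forall s t, s <= t -> c s <= c t &
      forall t, c s @[s --> t^'+] --> c t].
Proof.
move=> c.
have fn t : P [set w | X w <= t] \is a fin_num by apply: fin_num_measure; exact: mle.
split.
- by move=> t; apply: fine_ge0.
- move=> t; rewrite -lee_fin /c fineK //; apply: probability_le1; exact: mle.
- move=> s t st; rewrite /c fine_le //; apply: le_measure; rewrite ?inE; try exact: mle.
  by move=> w /= h; exact: le_trans h st.
- move=> t.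
  pose Xr : {RV P >-> R} := mfun_Sub (mem_set mX : X \in mfun).
  have Ec r : cdf Xr r = (c r)%:E.
    by rewrite /cdf /c fineK //= /distribution /pushforward; congr (P _);
      apply/seteqP; split => w /=; rewrite in_itv.
  have := @cdf_right_continuous _ _ _ P Xr t.
  rewrite Ec => /fine_cvg.
  have -> : (fine \o cdf Xr) = c by apply/funext => r /=; rewrite Ec.
  done.
Qed.

Lemma cvg_bsum (R : realType) (U : Type) (F : set_system U) (FF : Filter F)
  (I : Type) (s : seq I) (f : I -> U -> R) (l : I -> R) :
  (forall i, f i x @[x --> F] --> l i) ->
  (\sum_(i <- s) f i x) @[x --> F] --> \sum_(i <- s) l i.
Proof.
move=> h; elim: s => [|a s ih].
  under eq_fun do rewrite big_nil.
  by rewrite big_nil; exact: cvg_cst.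
under eq_fun do rewrite big_cons.
by rewrite big_cons; exact: cvgD.
Qed.

Lemma rc_extract (R : realType) (n : nat) (lam : 'I_n -> R)
  (lam0 : forall i, 0 <= lam i) (c : 'I_n -> R -> R)
  (cnd : forall i s t, s <= t -> c i s <= c i t)
  (crc : forall i t, c i s @[s --> t^'+] --> c i t) (k : 'I_n) (t0 : R)
  (h0 : \sum_(i < n) lam i * c i t0 < c k t0) :
  exists a b e, [/\ a < b, 0 < e &
       forall t, a <= t <= b -> \sum_(i < n) lam i * c i t + e <= c k t].
Proof.
pose G t := \sum_(i < n) lam i * c i t.
have Gnd s t : s <= t -> G s <= G t.
  by move=> st; apply: ler_sum => i _; rewrite ler_wpM2l // cnd.
have Gc : G s @[s --> t0^'+] --> G t0.
  by apply: cvg_bsum => i; apply: cvgMr; exact: crc.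
pose e := (c k t0 - G t0) / 2.
have e0 : 0 < e by rewrite /e divr_gt0 // subr_gt0.
have := @cvgr_le _ _ _ _ _ _ Gc (G t0 + e).
move=> /(_ _) hn; have := hn ltac:(by rewrite ltrDl).
case=> d /= d0 Hd.
exists t0, (t0 + d / 2), e; split => //.
- by rewrite ltrDl divr_gt0.
- move=> t /andP [ha hb].
  have hb' : G (t0 + d / 2) <= G t0 + e.
    apply: Hd; last by rewrite ltrDl divr_gt0.
    rewrite /= opprD addrA subrr sub0r normrN gtr0_norm ?divr_gt0 //.
    by rewrite ltr_pdivrMr // ltr_pMr // ltr1n.
  have := Gnd _ _ hb; have := cnd k _ _ ha; rewrite /e /G in hb' * => *.
  lra.
Qed.

Lemma coord (R : realType) (n : nat)
  (dm : 'I_n -> measure_display) (T : forall i, measurableType (dm i))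
  (P : forall i, probability (T i) R) (X : forall i, T i -> R)
  (iX : forall i, (P i).-integrable setT (fun w => (X i w)%:E))
  (lam : 'I_n -> R) (hs : simplex lam) (k : 'I_n)
  (H : forall t, \sum_(i < n) lam i * fine (P i [set w | X i w <= t])
                 <= fine (P k [set w | X k w <= t])) :
  fine (\int[P k]_w (X k w)%:E)%E <= \sum_(i < n) lam i * fine (\int[P i]_w (X i w)%:E)%E
  /\ ((exists t0, \sum_(i < n) lam i * fine (P i [set w | X i w <= t0])
                 < fine (P k [set w | X k w <= t0])) ->
      fine (\int[P k]_w (X k w)%:E)%E < \sum_(i < n) lam i * fine (\int[P i]_w (X i w)%:E)%E).
Proof.
pose c i t := fine (P i [set w | X i w <= t]).
have mX i : measurable_fun setT (X i).
  by apply/measurable_EFinP; exact: (measurable_int _ (iX i)).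
have cp i := @cprops _ _ _ (P i) _ (mX i).
pose A i := fine (\int[lebesgue_measure]_(t in `[0%R, +oo[) ((1 - c i t)%:E))%E.
pose B i := fine (\int[lebesgue_measure]_(t in `]-oo, 0%R[) ((c i t)%:E))%E.
have hA i : (A i)%:E = (\int[lebesgue_measure]_(t in `[0%R, +oo[) ((1 - c i t)%:E))%E.
  by case: (@layer _ _ _ _ _ (iX i)) => _ f1 f2; rewrite fineK.
have hB i : (B i)%:E = (\int[lebesgue_measure]_(t in `]-oo, 0%R[) ((c i t)%:E))%E.
  by case: (@layer _ _ _ _ _ (iX i)) => _ f1 f2; rewrite fineK.
have hE i : fine (\int[P i]_w (X i w)%:E)%E = A i - B i.
  by case: (@layer _ _ _ _ _ (iX i)) => E f1 f2; rewrite E fineB.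
have c0 i t : 0 <= c i t by move: (cp i) => /= [h _ _ _]; exact: h.
have c1 i t : c i t <= 1 by move: (cp i) => /= [_ h _ _]; exact: h.
have cnd i s t : s <= t -> c i s <= c i t by move: (cp i) => /= [_ _ h _]; exact: h.
have crc i t : c i s @[s --> t^'+] --> c i t by move: (cp i) => /= [_ _ _ h]; exact: h.
have [W S] := @core _ _ _ hs _ _ c0 c1 cnd _ _ hA hB H.
have Es : \sum_(i < n) lam i * fine (\int[P i]_w (X i w)%:E)%E =
          \sum_(i < n) lam i * (A i - B i).
  by apply: eq_bigr => i _; rewrite hE.
rewrite Es hE; split => // -[t0 ht0]; apply: S.
case: hs => lam0 _.
exact: (@rc_extract _ _ _ lam0 _ cnd crc _ _ ht0).
Qed.

Theorem corollary5p1p1 (R : realType) (d n : nat)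
  (dm : 'I_n -> measure_display) (T : forall i, measurableType (dm i))
  (P : forall i, probability (T i) R) (Z : forall i, T i -> 'I_d -> R)
  (hint : forall i j, (P i).-integrable setT (fun w => (Z i w j)%:E)) :
  forall k : 'I_n,
    CH (fun i => expect_vec (P i) (Z i)) k ->
    CDUS (fun i => cdfs_of (P i) (Z i)) k.
Proof.
move=> k hCH [lam [hs [hw [j [hle hlt]]]]]; apply: hCH; exists lam; split => //.
have mZ i j' : measurable_fun setT (fun w => Z i w j').
  by apply/measurable_EFinP; exact: (measurable_int _ (hint i j')).
have Hw j' t : \sum_(i < n) lam i * fine (P i [set w | Z i w j' <= t])
               <= fine (P k [set w | Z k w j' <= t]).
  pose x (m : nat) := fun i : 'I_d => if i == j' then t else m%:R.
  have cu : (fun m => \sum_(i < n) lam i * fine (P i [set w | pleq (Z i w) (x m)]))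
            @ \oo --> \sum_(i < n) lam i * fine (P i [set w | Z i w j' <= t]).
    apply: cvg_bsum => i; apply: cvgMr.
    exact: (@marg_cvg _ _ _ _ (P i) (Z i) (mZ i) j' t).
  have cv := @marg_cvg _ _ _ _ (P k) (Z k) (mZ k) j' t.
  rewrite -subr_ge0.
  apply: (cvgr_to_ge (cvgB cv cu)).
  apply: nearW => m /=; rewrite subr_ge0.
  exact: (hw (x m)).
split.
- move=> j'.
  have [W _] := @coord _ _ _ _ P (fun i w => Z i w j') (fun i => hint i j') lam hs k (Hw j').
  exact: W.
- exists j.
  have [_ S] := @coord _ _ _ _ P (fun i w => Z i w j) (fun i => hint i j) lam hs k (Hw j).
  exact: S hlt.
Qed.
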